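(* Consider the two-layer multi-item order fulfillment problem described in the context with a single FDC ($K=1$), any fixed costs $f_0,f_1\ge0$, and variable costs in $[a,b]$ for constants $b>a>0$. Then every online fulfillment policy $\mathrm{ALG}$ (deterministic or randomized) satisfies \[\mathfrak R(\mathrm{ALG})\ge\max\left\{1,\ \frac13\sqrt{\frac ba},\ \frac14\max_{n\ge2}\min\left\{n,\ \frac{f_0}{f_1+na}\right\}\right\},\] where the inner maximum is over integers $n\ge 2$.
   Context: Problem with one FDC (index $1$) and one RDC (index $0$, unlimited inventory). The FDC initially holds $I_{1,0}^i\ge0$ units of item $i$, never replenished. In periods $t=1,\dots,T$ an order $\boldsymbol S_t=(S_t^i)_i$ of nonnegative integers arrives; after observing it and the variable costs $c_{k,t}^i$, the policy must immediately and irrevocably choose $m_{0,t}^i,m_{1,t}^i\ge0$ with $m_{0,t}^i+m_{1,t}^i=S_t^i$ and $m_{1,t}^i\le I_{1,t-1}^i$, $I_{1,t}^i=I_{1,0}^i-\sum_{\tau\le t}m_{1,\tau}^i$. Period cost $\sum_{k=0,1}[f_k\mathbb{I}(\sum_im_{k,t}^i>0)+\sum_ic_{k,t}^im_{k,t}^i]$; total cost is the sum. An online policy (possibly randomized) decides in period $t$ using only fixed costs, initial inventories and orders/variable costs up to $t$. $\mathfrak R(\mathrm{ALG})$ is the supremum of $\mathrm{ALG}(I)/\mathrm{OPT}(I)$ ((expected) policy cost over offline optimal cost) over all numbers of items, horizons $T$, initial inventories, variable costs in $[a,b]$ and order sequences. *)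

(* Defs.v *)
From HB Require Import structures.
From mathcomp Require Import all_boot all_order all_algebra.
From mathcomp Require Import classical_sets reals constructive_ereal ereal.

Set Implicit Arguments.
Unset Strict Implicit.
Unset Printing Implicit Defensive.

Import Order.TTheory GRing.Theory Num.Theory.
Local Open Scope ring_scope.
Local Open Scope classical_set_scope.

Section Model.
Variable R : realType.

(* Data revealed in one period, for an instance with N items (indexed by 'I_N):
   the order S_t^i and the variable costs c_{0,t}^i (RDC) and c_{1,t}^i (FDC). *)
Record period (N : nat) := Period {
  ord : 'I_N -> nat;
  cost0 : 'I_N -> R;
  cost1 : 'I_N -> R }.

(* A decision: the quantities m_{1,t}^i shipped from the FDC;
   m_{0,t}^i := S_t^i - m_{1,t}^i is shipped from the RDC. *)
Definition dec (N : nat) := 'I_N -> nat.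

Definition stage_cost (f0 f1 : R) N (p : period N) (m1 : dec N) : R :=
  let m0 := fun i => (ord p i - m1 i)%N in
  (if (0 < \sum_i m0 i)%N then f0 else 0) +
  (if (0 < \sum_i m1 i)%N then f1 else 0) +
  \sum_i ((cost0 p i) * (m0 i)%:R + (cost1 p i) * (m1 i)%:R).

Definition remaining N (I0 : 'I_N -> nat) (hist : seq (period N * dec N)) (i : 'I_N) : nat :=
  (I0 i - \sum_(x <- hist) x.2 i)%N.

Definition feasible_dec N (inv : 'I_N -> nat) (p : period N) (m : dec N) : bool :=
  [forall i, (m i <= ord p i)%N && (m i <= inv i)%N].

(* A (possibly randomized) online policy, in behavioural form: given the number
   of items N, the initial inventories I0, the history of past periods together
   with its own past decisions, and the data of the current period, it returns a
   finitely supported probability distribution over decisions, as a list of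
   (probability, decision) pairs.  It does not know the horizon T.  Fixed costs
   and the cost range are fixed parameters of the setting. *)
Definition policy :=
  forall N : nat, ('I_N -> nat) -> seq (period N * dec N) -> period N -> seq (R * dec N).

Definition valid_policy (pol : policy) : Prop :=
  forall N (I0 : 'I_N -> nat) (hist : seq (period N * dec N)) (p : period N),
    all (fun x => (0 <= x.1) && feasible_dec (remaining I0 hist) p x.2) (pol N I0 hist p)
    /\ \sum_(x <- pol N I0 hist p) x.1 = 1.

Fixpoint exp_cost (f0 f1 : R) (pol : policy) N (I0 : 'I_N -> nat)
    (hist : seq (period N * dec N)) (ps : seq (period N)) : R :=
  match ps with
  | [::] => 0
  | p :: ps' =>
      \sum_(x <- pol N I0 hist p)
         x.1 * (stage_cost f0 f1 p x.2 + exp_cost f0 f1 pol I0 (rcons hist (p, x.2)) ps')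
  end.

Fixpoint plan_ok N (inv : 'I_N -> nat) (ps : seq (period N)) (ms : seq (dec N)) : Prop :=
  match ps, ms with
  | [::], [::] => True
  | p :: ps', m :: ms' => feasible_dec inv p m /\ plan_ok (fun i => (inv i - m i)%N) ps' ms'
  | _, _ => False
  end.

Fixpoint plan_cost (f0 f1 : R) N (ps : seq (period N)) (ms : seq (dec N)) : R :=
  match ps, ms with
  | p :: ps', m :: ms' => stage_cost f0 f1 p m + plan_cost f0 f1 ps' ms'
  | _, _ => 0
  end.

Definition OPT (f0 f1 : R) N (I0 : 'I_N -> nat) (ps : seq (period N)) : R :=
  inf [set x : R | exists ms, plan_ok I0 ps ms /\ x = plan_cost f0 f1 ps ms].

Definition costs_in (a b : R) N (ps : seq (period N)) : bool :=
  all (fun p => [forall i, (a <= cost0 p i <= b) && (a <= cost1 p i <= b)]) ps.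

(* Competitive ratio: supremum over all instances (number of items N, initial
   inventories I0, horizon T = size ps, order/cost sequences ps with costs in
   [a,b]) of expected policy cost over offline optimal cost; instances with
   OPT = 0 (i.e. no demand at all) are excluded since the ratio is 0/0. *)
Definition comp_ratio (f0 f1 a b : R) (pol : policy) : \bar R :=
  ereal_sup [set (x%:E)%E | x in
    [set x : R | exists N (I0 : 'I_N -> nat) (ps : seq (period N)),
       [/\ costs_in a b ps, 0 < OPT f0 f1 I0 ps &
           x = exp_cost f0 f1 pol I0 [::] ps / OPT f0 f1 I0 ps]]].

End Model.

(* Main.v *)
Require Import Defs.
From HB Require Import structures.
From mathcomp Require Import all_boot all_order all_algebra.
From mathcomp Require Import classical_sets reals constructive_ereal ereal.
From mathcomp Require Import lra.
Import Order.TTheory GRing.Theory Num.Theory.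
Local Open Scope ring_scope.
Local Open Scope classical_set_scope.

Section H.
Variable R : realType.
Variables f0 f1 : R.
Hypotheses (hf0 : 0 <= f0) (hf1 : 0 <= f1).

Lemma remaining_rcons N (I0 : 'I_N -> nat) hist y i :
  (remaining (R:=R) I0 (rcons hist y) i <= remaining (R:=R) I0 hist i)%N.
Proof. by rewrite /remaining -cats1 big_cat /= big_seq1 leq_sub2l // leq_addr. Qed.

Lemma feasible_mono N (inv inv' : 'I_N -> nat) p m :
  (forall i, inv i <= inv' i)%N -> feasible_dec (R:=R) inv p m -> feasible_dec inv' p m.
Proof.
move=> H /forallP F; apply/forallP => i; case/andP: (F i) => -> /= h.
exact: leq_trans h (H i).
Qed.

Lemma sum_mono_w N (s : seq (R * dec N)) (P : dec N -> bool) (G F : dec N -> R) :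
  all (fun x => (0 <= x.1) && P x.2) s -> (forall m, P m -> G m <= F m) ->
  \sum_(x <- s) x.1 * G x.2 <= \sum_(x <- s) x.1 * F x.2.
Proof.
move=> + H; elim: s => [|x s IH] /=; first by rewrite !big_nil.
case/andP => /andP [x0 Px] /IH h; rewrite !big_cons; apply: lerD => //.
by apply: ler_wpM2l => //; apply: H.
Qed.

Lemma sum_const_w N (s : seq (R * dec N)) c :
  \sum_(x <- s) x.1 = 1 -> \sum_(x <- s) x.1 * c = c.
Proof. by move=> h; rewrite -mulr_suml h mul1r. Qed.

Lemma exp_cost_lb (pol : policy R) N (I0 : 'I_N -> nat) (g : period R N -> R) inv :
  valid_policy pol ->
  forall ps hist, (forall i, remaining I0 hist i <= inv i)%N ->
  (forall p m, List.In p ps -> feasible_dec inv p m -> g p <= stage_cost f0 f1 p m) ->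
  \sum_(p <- ps) g p <= exp_cost f0 f1 pol I0 hist ps.
Proof.
move=> vp; elim => [|p ps IH] hist Hinv Hg /=; first by rewrite big_nil.
have [A S] := vp N I0 hist p.
rewrite big_cons -(@sum_const_w _ _ (g p + \sum_(j <- ps) g j)%R S).
apply: (@sum_mono_w _ _ (feasible_dec (remaining I0 hist) p) (fun _ => g p + \sum_(j <- ps) g j) (fun m => stage_cost f0 f1 p m + exp_cost f0 f1 pol I0 (rcons hist (p, m)) ps)) => // m Fm.
apply: lerD; first by apply: Hg; [left | exact: feasible_mono Fm].
apply: IH; last by move=> q m' Hq; apply: Hg; right.
by move=> i; exact: (leq_trans (remaining_rcons _ _ _ _ _) (Hinv i)).
Qed.

Lemma stage_ge N (p : period R N) m a :
  (forall i, m i <= ord p i)%N -> (forall i, a <= cost0 p i /\ a <= cost1 p i) ->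
  a * \sum_i (ord p i)%:R <= stage_cost f0 f1 p m.
Proof.
move=> Hm Hc; rewrite /stage_cost; apply: ler_wpDl.
  by apply: addr_ge0; case: ifP.
rewrite mulr_sumr; apply: ler_sum => i _.
have [h0 h1] := Hc i.
have -> : (ord p i)%:R = (ord p i - m i)%:R + (m i)%:R :> R by rewrite -natrD subnK.
rewrite mulrDr.
apply: lerD; apply: ler_wpM2r => //; exact: ler0n.
Qed.

Lemma costs_in_cons a b N (p : period R N) ps :
  costs_in a b (p :: ps) -> (forall i, a <= cost0 p i /\ a <= cost1 p i) /\ costs_in a b ps.
Proof.
case/andP => /forallP H Hs; split => // i.
by case/andP: (H i) => /andP [-> _] /andP [-> _].
Qed.

Lemma plan_cost_ge a b N (ps : seq (period R N)) : forall inv ms,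
  costs_in a b ps -> plan_ok inv ps ms ->
  a * \sum_(p <- ps) \sum_i (ord p i)%:R <= plan_cost f0 f1 ps ms.
Proof.
elim: ps => [|p ps IH] inv [|m ms] //=; first by rewrite big_nil mulr0.
move=> /costs_in_cons [Hc Hcs] [F Hok].
rewrite big_cons mulrDr; apply: lerD; last exact: (IH _ _ Hcs Hok).
apply: stage_ge => // i; by case/andP: (forallP F i).
Qed.

Lemma OPT_le a b N (I0 : 'I_N -> nat) ps ms : 0 <= a ->
  costs_in a b ps -> plan_ok I0 ps ms -> OPT f0 f1 I0 ps <= plan_cost f0 f1 ps ms.
Proof.
move=> a0 Hc Hok; apply: ge_inf; last by exists ms.
exists 0 => x [ms' [Hok' ->]].
have := plan_cost_ge _ _ _ _ _ _ Hc Hok'; apply: le_trans.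
apply: mulr_ge0 => //; apply: sumr_ge0 => p _; apply: sumr_ge0 => i _; exact: ler0n.
Qed.

Lemma OPT_ge a b N (I0 : 'I_N -> nat) ps ms :
  costs_in a b ps -> plan_ok I0 ps ms ->
  a * \sum_(p <- ps) \sum_i (ord p i)%:R <= OPT f0 f1 I0 ps.
Proof.
move=> Hc Hok; apply: lb_le_inf; first by exists (plan_cost f0 f1 ps ms); exists ms.
by move=> x [ms' [Hok' ->]]; exact: (plan_cost_ge _ _ _ _ _ _ Hc Hok').
Qed.

Lemma ratio_le (pol : policy R) a b N (I0 : 'I_N -> nat) ps :
  costs_in a b ps -> 0 < OPT f0 f1 I0 ps ->
  ((exp_cost f0 f1 pol I0 [::] ps / OPT f0 f1 I0 ps)%:E <= comp_ratio f0 f1 a b pol)%E.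
Proof.
move=> Hc Ho; apply: ereal_sup_ubound; exists (exp_cost f0 f1 pol I0 [::] ps / OPT f0 f1 I0 ps) => //.
by exists N, I0, ps.
Qed.
End H.
Arguments OPT_ge {R f0 f1} hf0 hf1 {a b N I0 ps ms}.
Arguments OPT_le {R f0 f1} hf0 hf1 {a b N I0 ps ms}.
Arguments ratio_le {R f0 f1} pol {a b N I0 ps}.
Arguments exp_cost_lb {R} f0 f1 {pol N I0} g inv.
Arguments stage_ge {R f0 f1} hf0 hf1 {N p m} a.
Arguments sum_mono_w {R N s} P G F.
Arguments sum_const_w {R N s} c.

Section P1.
Variable R : realType.
Variables (f0 f1 a b : R).
Hypotheses (hf0 : 0 <= f0) (hf1 : 0 <= f1) (ha : 0 < a) (hab : a < b).

Lemma part1 (pol : policy R) : valid_policy pol -> (1%:E <= comp_ratio f0 f1 a b pol)%E.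
Proof.
move=> vp.
pose P : period R 1 := Period (fun _ => 1%N) (fun _ => a) (fun _ => a).
pose I0 : 'I_1 -> nat := fun _ => 0%N.
have Hc : costs_in a b [:: P] by rewrite /costs_in /= andbT; apply/forallP => i /=; rewrite lexx (ltW hab).
have Hok : plan_ok I0 [:: P] [:: (fun _ => 0%N)] by split => //; apply/forallP => i.
have Ho : 0 < OPT f0 f1 I0 [:: P].
  apply: lt_le_trans (OPT_ge hf0 hf1 Hc Hok).
  by rewrite big_seq1 big_ord1 mulr1.
have Hst : forall m, feasible_dec (R:=R) I0 P m -> f0 + a <= stage_cost f0 f1 P m.
  move=> m /forallP /(_ ord0) /andP [_]; rewrite leqn0 => /eqP m0.
  by rewrite /stage_cost !big_ord1 m0 /= subn0 mulr0 !addr0 mulr1.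
have Halg : f0 + a <= exp_cost f0 f1 pol I0 [::] [:: P].
  have := exp_cost_lb f0 f1 (fun _ => f0 + a) I0 vp [:: P] [::].
  rewrite big_seq1; apply.
  - by move=> i; rewrite /remaining big_nil.
  - by move=> p m [<-|[]]; apply: Hst.
have Hopt : OPT f0 f1 I0 [:: P] <= f0 + a.
  apply: le_trans (OPT_le hf0 hf1 (ltW ha) Hc Hok) _.
  by rewrite /= /stage_cost !big_ord1 /= subn0 mulr0 !addr0 mulr1.
apply: le_trans (ratio_le pol Hc Ho).
rewrite lee_fin ler_pdivlMr // mul1r; exact: le_trans Hopt Halg.
Qed.
End P1.

Section Aux.
Variable R : realType.

Lemma sum_lin N (s : seq (R * dec N)) c d (h : dec N -> R) :
  \sum_(x <- s) x.1 = 1 -> \sum_(x <- s) x.1 * (c + d * h x.2) = c + d * \sum_(x <- s) x.1 * h x.2.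
Proof.
move=> S; rewrite (eq_bigr (fun x => x.1 * c + d * (x.1 * h x.2))); last first.
  by move=> x _; rewrite mulrDr mulrCA.
by rewrite big_split /= sum_const_w // -mulr_sumr.
Qed.

Lemma sum_cst_seq T (s : seq T) (c : R) : \sum_(x <- s) c = c *+ size s.
Proof. by elim: s => [|x s IH]; rewrite ?big_nil ?big_cons ?IH ?mulrS. Qed.

Lemma costs_in_In a b N (ps : seq (period R N)) p :
  costs_in a b ps -> List.In p ps -> forall i, a <= cost0 p i /\ a <= cost1 p i.
Proof.
elim: ps => [|q ps IH] //= /costs_in_cons [Hq Hs] [<-|H]; first exact: Hq.
exact: IH.
Qed.
Arguments costs_in_In {a b N ps p}.

Lemma exp_cost_ge0 f0 f1 (hf0 : 0 <= f0) (hf1 : 0 <= f1) (pol : policy R) a b N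
  (I0 : 'I_N -> nat) hist ps :
  valid_policy pol -> 0 <= a -> costs_in a b ps -> 0 <= exp_cost f0 f1 pol I0 hist ps.
Proof.
move=> vp a0 Hc.
have := exp_cost_lb f0 f1 (fun _ => 0) I0 vp ps hist.
rewrite big1_eq; apply; first by move=> i; exact: leq_subr.
move=> p m Hp /forallP F.
have Hm : forall i, (m i <= ord p i)%N by move=> i; case/andP: (F i).
apply: le_trans (stage_ge hf0 hf1 a Hm (costs_in_In Hc Hp)).
apply: mulr_ge0 => //; apply: sumr_ge0 => i _; exact: ler0n.
Qed.

Definition single a n (j : 'I_n) : period R n := Period (fun i => nat_of_bool (i == j)) (fun _ => a) (fun _ => a).
Definition dsing n (j : 'I_n) : dec n := fun i => nat_of_bool (i == j).
Arguments single a {n} j.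
Arguments dsing {n} j.

Lemma singles_ok a n (s : seq 'I_n) : uniq s -> forall inv : 'I_n -> nat,
  (forall i, i \in s -> 0 < inv i)%N ->
  plan_ok inv [seq single a j | j <- s] [seq dsing j | j <- s].
Proof.
elim: s => [|j s IH] //= /andP [js us] inv H; split.
  apply/forallP => i /=; rewrite /dsing leqnn /=.
  by case: eqP => [->|] //; apply: H; rewrite mem_head.
apply: IH => // i iS; rewrite /dsing.
have -> : (i == j) = false by apply/eqP => ij; move: js; rewrite -ij iS.
by rewrite subn0; apply: H; rewrite inE iS orbT.
Qed.

Lemma In_map_single a n (s : seq 'I_n) p :
  List.In p [seq single a j | j <- s] -> exists j, p = single a j.
Proof. elim: s => [|j s IH] //= [<-|H]; [by exists j | exact: IH]. Qed.

End Aux.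
Arguments dsing {n} j.
Arguments single {R} a {n} j.
Arguments In_map_single {R a n s p}.

Section P3.
Variable R : realType.
Variables (f0 f1 a b : R).
Hypotheses (hf0 : 0 <= f0) (hf1 : 0 <= f1) (ha : 0 < a) (hab : a < b).

Lemma part3 (pol : policy R) : valid_policy pol -> forall n : nat, (2 <= n)%N ->
  ((4^-1 * Num.min (n%:R) (f0 / (f1 + n%:R * a)))%:E <= comp_ratio f0 f1 a b pol)%E.
Proof.
move=> vp n n2.
pose P1 : period R n := Period (fun _ => 1%N) (fun _ => a) (fun _ => a).
pose I0 : 'I_n -> nat := fun _ => 1%N.
pose sing := [seq single a j | j <- enum 'I_n].
pose e (m : dec n) : R := if [forall i, m i == 1%N] then 1 else 0.
pose ones : dec n := fun _ => 1%N.
pose zeros : dec n := fun _ => 0%N.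
have ab : a <= b := ltW hab.
have HcA : costs_in a b [:: P1].
  by rewrite /costs_in /= andbT; apply/forallP => i /=; rewrite lexx ab.
have HcB : costs_in a b (P1 :: sing).
  rewrite /costs_in /= all_map; apply/andP; split.
    by apply/forallP => i /=; rewrite lexx ab.
  by apply/allP => j _ /=; apply/forallP => i /=; rewrite lexx ab.
have HokA : plan_ok I0 [:: P1] [:: ones] by split => //; apply/forallP.
have HokB : plan_ok I0 (P1 :: sing) (zeros :: [seq dsing j | j <- enum 'I_n]).
  split; first by apply/forallP.
  by apply: singles_ok; [exact: enum_uniq | move=> i _].
have Hsum : forall (c : R), \sum_(i < n) c = c *+ n.
  by move=> c; rewrite sumr_const card_ord.
have Hsj : forall j : 'I_n, stage_cost f0 f1 (single a j) (dsing j) = f1 + a.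
  move=> j; rewrite /stage_cost /single /dsing /=.
  have E1 : (\sum_(i < n) nat_of_bool (i == j) = 1)%N.
    by rewrite (bigD1 j) //= eqxx big1 // => i /negbTE ->.
  have E2 : \sum_(i < n) a * (nat_of_bool (i == j))%:R = a.
    by rewrite (bigD1 j) //= eqxx mulr1 big1 ?addr0 // => i /negbTE ->; rewrite mulr0.
  rewrite (eq_bigr (fun i => a * (nat_of_bool (i == j))%:R)); last by move=> i _; rewrite subnn mulr0 add0r.
  rewrite E2 E1 /= (eq_bigr (fun _ => 0%N)); last by move=> i _; rewrite subnn.
  by rewrite big1_eq /= add0r.
have HoptA : OPT f0 f1 I0 [:: P1] <= f1 + n%:R * a.
  apply: le_trans (OPT_le hf0 hf1 (ltW ha) HcA HokA) _.
  rewrite /= /stage_cost /= addr0 (eq_bigr (fun _ => a)); last first.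
    by move=> i _; rewrite subnn mulr0 add0r mulr1.
  rewrite (eq_bigr (fun _ => 0%N)); last by move=> i _; rewrite subnn.
  rewrite big1_eq /= add0r Hsum sum_nat_const card_ord muln1.
  by case: n n2 {vp P1 I0 sing e ones zeros HcA HcB HokA HokB Hsum Hsj} => // n _; rewrite mulr_natl.
have Hpc : forall s : seq 'I_n, plan_cost f0 f1 [seq single a j | j <- s] [seq dsing j | j <- s] = (f1 + a) *+ size s.
  by elim=> [|j s IH] //=; rewrite IH Hsj mulrS.
have n0 : (0 < n)%N by apply: leq_trans n2.
have n0R : 0 < n%:R :> R by rewrite ltr0n.
have HoptB : OPT f0 f1 I0 (P1 :: sing) <= f0 + n%:R * a + n%:R * (f1 + a).
  apply: le_trans (OPT_le hf0 hf1 (ltW ha) HcB HokB) _.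
  have -> : plan_cost f0 f1 (P1 :: sing) (zeros :: [seq dsing j | j <- enum 'I_n]) = stage_cost f0 f1 P1 zeros + (f1 + a) *+ n.
    transitivity (stage_cost f0 f1 P1 zeros + plan_cost f0 f1 sing [seq dsing j | j <- enum 'I_n]); first reflexivity.
    by rewrite /sing Hpc size_enum_ord.
  rewrite /stage_cost /= (eq_bigr (fun _ => a)); last first.
    by move=> i _; rewrite subn0 mulr0 addr0 mulr1.
  rewrite (eq_bigr (fun _ => 1%N)); last by move=> i _; rewrite subn0.
  have S1 : (\sum_(i < n) 1 = n)%N by rewrite sum_nat_const card_ord muln1.
  by rewrite /zeros big1_eq S1 n0 ltnn Hsum addr0 !mulr_natl.
have HoA : 0 < OPT f0 f1 I0 [:: P1].
  apply: lt_le_trans (OPT_ge hf0 hf1 HcA HokA).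
  by rewrite big_seq1 /= Hsum mulr_gt0 // pmulrn_rgt0.
have HoB : 0 < OPT f0 f1 I0 (P1 :: sing).
  apply: lt_le_trans (OPT_ge hf0 hf1 HcB HokB).
  rewrite big_cons /= Hsum mulr_gt0 // ltr_pwDl ?pmulrn_rgt0 //.
  by apply: sumr_ge0 => p _; apply: sumr_ge0 => i _; exact: ler0n.
have [HpA HpS] := vp n I0 [::] P1.
pose p := \sum_(x <- pol n I0 [::] P1) x.1 * e x.2.
have Hp0 : 0 <= p.
  have := sum_mono_w _ (fun _ => 0) e HpA.
  rewrite (sum_const_w 0 HpS); apply => m _; rewrite /e; by case: ifP.
have Hp1 : p <= 1.
  have := sum_mono_w _ e (fun _ => 1) HpA.
  rewrite (sum_const_w 1 HpS); apply => m _; rewrite /e; by case: ifP.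
have Hst1 : forall m, feasible_dec (remaining (R:=R) I0 [::]) P1 m -> f0 + (- f0) * e m <= stage_cost f0 f1 P1 m.
  move=> m /forallP F.
  have Hm : forall i, (m i <= 1)%N by move=> i; case/andP: (F i).
  rewrite /e; case: ifP => H.
    have Hc1 : forall i, a <= cost0 P1 i /\ a <= cost1 P1 i by move=> i; split.
    rewrite mulr1 addrN; apply: le_trans (@stage_ge _ _ _ hf0 hf1 _ P1 m a Hm Hc1).
    by apply: mulr_ge0 (ltW ha) _; apply: sumr_ge0 => i _; exact: ler0n.
  move/negbT: H => /forallPn [i Hi].
  have mi : m i = 0%N by move: (Hm i) Hi; case: (m i) => [|[]].
  have Hpos : (0 < \sum_(k < n) (ord P1 k - m k))%N.
    by rewrite (bigD1 i) //= mi.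
  rewrite mulr0 addr0 /stage_cost Hpos -addrA ler_wpDr //.
  apply: addr_ge0; first by case: ifP.
  apply: sumr_ge0 => k _; apply: addr_ge0; apply: mulr_ge0 => //; exact: (ltW ha).
have HcS : costs_in a b sing by case/costs_in_cons: HcB.
have Hrest : forall m, feasible_dec (remaining (R:=R) I0 [::]) P1 m ->
    n%:R * f0 * e m <= exp_cost f0 f1 pol I0 [:: (P1, m)] sing.
  move=> m _; rewrite /e; case: ifP => H; last first.
    by rewrite mulr0; exact: (@exp_cost_ge0 _ _ _ hf0 hf1 pol a b _ I0 _ _ vp (ltW ha) HcS).
  have := exp_cost_lb f0 f1 (fun _ => f0) (fun _ => 0%N) vp sing [:: (P1, m)].
  rewrite sum_cst_seq size_map size_enum_ord mulr1 mulr_natl; apply.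
    by move=> i; rewrite /remaining big_seq1 /= (eqP (forallP H i)).
  move=> q m' Hq /forallP F; have [j ->] := In_map_single Hq.
  have mj : m' j = 0%N by case/andP: (F j) => _; rewrite leqn0 => /eqP.
  have Hpos : (0 < \sum_(k < n) (ord (single a j) k - m' k))%N.
    by rewrite (bigD1 j) //= mj eqxx.
  rewrite /stage_cost Hpos -addrA ler_wpDr //.
  apply: addr_ge0; first by case: ifP.
  apply: sumr_ge0 => k _; apply: addr_ge0; apply: mulr_ge0 => //; exact: (ltW ha).
have HA : f0 + (- f0) * p <= exp_cost f0 f1 pol I0 [::] [:: P1].
  rewrite /= /p -(@sum_lin _ _ _ f0 (- f0) e HpS).
  apply: (sum_mono_w _ (fun m => f0 + - f0 * e m) (fun m => stage_cost f0 f1 P1 m + 0) HpA) => m Fm.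
  rewrite addr0; exact: Hst1.
have HB : f0 + (n%:R * f0 - f0) * p <= exp_cost f0 f1 pol I0 [::] (P1 :: sing).
  rewrite [exp_cost _ _ _ _ _ _]/= /p -(@sum_lin _ _ _ f0 (n%:R * f0 - f0) e HpS).
  apply: (sum_mono_w _ (fun m => f0 + (n%:R * f0 - f0) * e m) (fun m => stage_cost f0 f1 P1 m + exp_cost f0 f1 pol I0 [:: (P1, m)] sing) HpA) => m Fm.
  have := Hst1 m Fm; have := Hrest m Fm; lra.
rewrite leNgt; apply/negP => Hlt.
have rA := le_lt_trans (ratio_le pol HcA HoA) Hlt.
have rB := le_lt_trans (ratio_le pol HcB HoB) Hlt.
rewrite lte_fin ltr_pdivrMr // in rA.
rewrite lte_fin ltr_pdivrMr // in rB.
move: rA rB HoptA HoptB HA HB.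
set ALGA := exp_cost _ _ _ _ _ _.
set ALGB := exp_cost _ _ _ _ _ _.
set OA := OPT _ _ _ _.
set OB := OPT _ _ _ _.
set D := f1 + n%:R * a.
set m := Num.min _ _.
move=> rA rB HoA' HoB' HA HB.
have D0 : 0 < D by rewrite /D ltr_pwDr // mulr_gt0.
have hmn : m <= n%:R by rewrite /m ge_min lexx.
have hmK : m <= f0 / D by rewrite /m ge_min lexx orbT.
have hm0 : 0 <= m by rewrite /m le_min ltW //= divr_ge0 // ltW.
have hmD : m * D <= f0 by rewrite -ler_pdivlMr.
have c0 : 0 <= 4^-1 * m by apply: mulr_ge0.
have e1 : 4^-1 * m * OA <= 4^-1 * m * D by apply: ler_wpM2l.
have n2R : 2 <= n%:R :> R by rewrite (ler_nat R 2 n).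
have e2a : 2 * a <= n%:R * a by apply: ler_wpM2r => //; exact: ltW.
have e2 : 4^-1 * m * OB <= 4^-1 * m * (f0 + n%:R * D).
  apply: ler_wpM2l => //; apply: le_trans HoB' _.
  rewrite /D; have : n%:R * (2 * a) <= n%:R * (n%:R * a) by apply: ler_wpM2l => //; exact: ltW.
  lra.
have e3 : n%:R * (f0 - f0 * p) < n%:R * (4^-1 * m * D).
  rewrite ltr_pM2l //; lra.
have e4 : m * f0 <= n%:R * f0 by apply: ler_wpM2r.
have e5 : n%:R * (m * D) <= n%:R * f0 by apply: ler_wpM2l => //; exact: ltW.
have e6 : f0 * p <= f0 by rewrite -{2}(mulr1 f0); apply: ler_wpM2l.
have e7 : 0 <= n%:R * f0 by apply: mulr_ge0 => //; exact: ltW.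
nra.
Qed.
End P3.

Lemma alg2 (R : realType) (a r Q mu f1 F : R) :
  0 < a -> 1 < r -> 0 <= Q ->
  a*r*Q - (a*r - a)*mu < r/3*(f1 + a*Q) ->
  (a*r+a)*Q + (a*r*r - a*r)*mu < r/3*(F + (a*r+a)*Q) ->
  r/3*((a*r*r - a*r)*f1 + (a*r - a)*F) < Q*(a*a*(r-1)) -> False.
Proof.
move=> a0 r1 Q0 hA hB hQ.
have p1 : 0 <= a*r*r - a*r.
  have : 0 <= a * r * (r - 1) by apply: mulr_ge0; [apply: mulr_ge0; lra | lra].
  lra.
have p2 : 0 <= a*r - a.
  have : 0 <= a * (r - 1) by apply: mulr_ge0; lra.
  lra.
have E1 := ler_wpM2l p1 (ltW hA).
have E2 := ler_wpM2l p2 (ltW hB).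
have E3 : 0 <= Q * (a * a * (r - 1)) * (r * r + 2 * r).
  have h1 : 0 <= a * a by apply: mulr_ge0; lra.
  have h2 : 0 <= a * a * (r - 1) by apply: mulr_ge0 => //; lra.
  have h3 : 0 <= r * r by apply: mulr_ge0; lra.
  apply: mulr_ge0; first exact: mulr_ge0.
  lra.
move: E1 E2 E3 hQ.
lra.
Qed.

Lemma exp_cost_cons (R : realType) (f0 f1 : R) pol N (I0 : 'I_N -> nat) hist p ps :
  exp_cost f0 f1 pol I0 hist (p :: ps) = \sum_(y <- pol N I0 hist p) y.1 * (stage_cost f0 f1 p y.2 + exp_cost f0 f1 pol I0 (rcons hist (p, y.2)) ps).
Proof. by []. Qed.

Lemma stage_ge_var (R : realType) (f0 f1 : R) N (p : period R N) m :
  0 <= f0 -> 0 <= f1 ->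
  \sum_i (cost0 p i * (ord p i - m i)%:R + cost1 p i * (m i)%:R) <= stage_cost f0 f1 p m.
Proof.
move=> h0 h1; rewrite /stage_cost; apply: ler_wpDl => //.
by apply: addr_ge0; case: ifP.
Qed.

Section P2.
Variable R : realType.
Variables (f0 f1 a b : R).
Hypotheses (hf0 : 0 <= f0) (hf1 : 0 <= f1) (ha : 0 < a) (hab : a < b).

Lemma part2 (pol : policy R) : valid_policy pol ->
  ((3^-1 * Num.sqrt (b / a))%:E <= comp_ratio f0 f1 a b pol)%E.
Proof.
move=> vp.
set r := Num.sqrt (b / a).
have ba1 : 1 < b / a by rewrite ltr_pdivlMr // mul1r.
have r1 : 1 < r by rewrite /r -sqrtr1 ltr_sqrt // (lt_trans ltr01 ba1).
have rr : r * r = b / a by rewrite -expr2 sqr_sqrtr // ltW // (lt_trans ltr01 ba1).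
have hb : b = a * r * r by rewrite -mulrA rr mulrC divfK // gt_eqF.
pose x := a * r.
have ax : a <= x by rewrite /x ler_peMr // ltW.
have xb : x <= b by rewrite hb /x ler_peMr // ?ltW // mulr_gt0 // (lt_trans ltr01 r1).
pose K' := (b - x) * f1 + (x - a) * (f0 + f1).
have d0 : 0 < a * a * (r - 1) by rewrite !mulr_gt0 // subr_gt0.
have K0 : 0 <= K'.
  by rewrite /K' addr_ge0 // mulr_ge0 // ?subr_ge0 // addr_ge0.
pose y := (r / 3 * K') / (a * a * (r - 1)).
have y0 : 0 <= y.
  by rewrite /y divr_ge0 ?(ltW d0) // mulr_ge0 // divr_ge0 // ltW // (lt_trans ltr01 r1).
pose Q := Num.Def.archi_bound y.
have hQ : r / 3 * K' < Q%:R * (a * a * (r - 1)).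
  by rewrite -ltr_pdivrMr //; exact: archi_boundP y0.
have Q0 : (0 < Q)%N by rewrite -(ltr0n R); apply: le_lt_trans y0 (archi_boundP y0).
pose P1 : period R 1 := Period (fun _ => Q) (fun _ => x) (fun _ => a).
pose P2 : period R 1 := Period (fun _ => Q) (fun _ => b) (fun _ => a).
pose I0 : 'I_1 -> nat := fun _ => Q.
have ab : a <= b := ltW hab.
have HcA : costs_in a b [:: P1].
  by rewrite /costs_in /= andbT; apply/forallP => i /=; rewrite lexx ab ax xb.
have HcB : costs_in a b [:: P1; P2].
  by rewrite /costs_in /= andbT; apply/andP; split; apply/forallP => i /=; rewrite !lexx ab ?ax ?xb.
have HokA : plan_ok I0 [:: P1] [:: (fun _ => Q)] by split => //; apply/forallP => i /=; rewrite leqnn.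
have HokB : plan_ok I0 [:: P1; P2] [:: (fun _ => 0%N); (fun _ => Q)].
  by split; [apply/forallP | split => //; apply/forallP => i /=; rewrite subn0 leqnn].
have HoptA : OPT f0 f1 I0 [:: P1] <= f1 + a * Q%:R.
  apply: le_trans (OPT_le hf0 hf1 (ltW ha) HcA HokA) _.
  rewrite /= /stage_cost /= !big_ord1 subnn ltnn Q0 mulr0; lra.
have HoptB : OPT f0 f1 I0 [:: P1; P2] <= f0 + f1 + (x + a) * Q%:R.
  apply: le_trans (OPT_le hf0 hf1 (ltW ha) HcB HokB) _.
  rewrite /= /stage_cost /= !big_ord1 subnn subn0 ltnn Q0 mulr0; lra.
have Qpos : 0 < (Q%:R : R) by rewrite ltr0n.
have HoA : 0 < OPT f0 f1 I0 [:: P1].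
  apply: lt_le_trans (OPT_ge hf0 hf1 HcA HokA).
  by rewrite big_seq1 big_ord1 mulr_gt0.
have HoB : 0 < OPT f0 f1 I0 [:: P1; P2].
  apply: lt_le_trans (OPT_ge hf0 hf1 HcB HokB).
  by rewrite big_cons big_seq1 !big_ord1 mulr_gt0 // addr_gt0.
have [HpA HpS] := vp 1 I0 [::] P1.
pose mu := \sum_(y <- pol 1 I0 [::] P1) y.1 * ((y.2 ord0)%:R : R).
have Hst1 : forall m, feasible_dec (remaining (R:=R) I0 [::]) P1 m ->
    x * Q%:R + (- (x - a)) * (m ord0)%:R <= stage_cost f0 f1 P1 m.
  move=> m /forallP /(_ ord0) /andP [Hm _].
  apply: le_trans (@stage_ge_var R f0 f1 1 P1 m hf0 hf1).
  rewrite big_ord1 /= natrB //; lra.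
have Hrest : forall m, feasible_dec (remaining (R:=R) I0 [::]) P1 m ->
    a * Q%:R + (b - a) * (m ord0)%:R <= exp_cost f0 f1 pol I0 [:: (P1, m)] [:: P2].
  move=> m /forallP /(_ ord0) /andP [Hm _].
  have := exp_cost_lb f0 f1 (fun _ => a * Q%:R + (b - a) * (m ord0)%:R) (fun _ => (Q - m ord0)%N) vp [:: P2] [:: (P1, m)].
  rewrite big_seq1; apply.
    by move=> i; rewrite /remaining big_seq1 (ord1 i).
  move=> q m' [<-|[]] /forallP /(_ ord0) /andP [_ Hm'].
  apply: le_trans (@stage_ge_var R f0 f1 1 P2 m' hf0 hf1).
  rewrite big_ord1 /=.
  have Hm'Q : (m' ord0 <= Q)%N by apply: leq_trans Hm' (leq_subr _ _).
  have Hle : (m ord0 <= Q - m' ord0)%N.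
    by rewrite leq_subRL // addnC -leq_subRL.
  move: Hle; rewrite -(ler_nat R) natrB // => Hle.
  have Hba : 0 <= b - a by rewrite subr_ge0.
  have := ler_wpM2l Hba Hle.
  lra.
have HA : x * Q%:R + (- (x - a)) * mu <= exp_cost f0 f1 pol I0 [::] [:: P1].
  rewrite exp_cost_cons /mu -(@sum_lin _ _ _ (x * Q%:R) (- (x - a)) (fun m => (m ord0)%:R) HpS).
  apply: (sum_mono_w _ (fun m => x * Q%:R + - (x - a) * (m ord0)%:R) (fun m => stage_cost f0 f1 P1 m + 0) HpA) => m Fm.
  rewrite addr0; exact: Hst1.
have HB : (x * Q%:R + a * Q%:R) + (b - x) * mu <= exp_cost f0 f1 pol I0 [::] [:: P1; P2].
  rewrite exp_cost_cons /mu -(@sum_lin _ _ _ (x * Q%:R + a * Q%:R) (b - x) (fun m => (m ord0)%:R) HpS).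
  apply: (sum_mono_w _ (fun m => (x * Q%:R + a * Q%:R) + (b - x) * (m ord0)%:R) (fun m => stage_cost f0 f1 P1 m + exp_cost f0 f1 pol I0 [:: (P1, m)] [:: P2]) HpA) => m Fm.
  have := Hst1 m Fm; have := Hrest m Fm; lra.
rewrite leNgt; apply/negP => Hlt.
have rA := le_lt_trans (ratio_le pol HcA HoA) Hlt.
have rB := le_lt_trans (ratio_le pol HcB HoB) Hlt.
rewrite lte_fin ltr_pdivrMr // in rA.
rewrite lte_fin ltr_pdivrMr // in rB.
have c0 : 0 <= 3^-1 * r by apply: mulr_ge0 => //; apply: ltW; apply: lt_trans r1.
have eA := ler_wpM2l c0 HoptA.
have eB := ler_wpM2l c0 HoptB.
have Qge : 0 <= (Q%:R : R) by apply: ltW.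
apply: (@alg2 R a r Q%:R mu f1 (f0 + f1) ha r1 Qge).
- move: HA rA eA; rewrite /x; lra.
- move: HB rB eB; rewrite /x hb; lra.
- move: hQ; rewrite /K' /x hb; lra.
Qed.
End P2.

Local Close Scope classical_set_scope.

Theorem theorem7 (R : realType) (f0 f1 a b : R) (pol : policy R) :
  0 <= f0 -> 0 <= f1 -> 0 < a -> a < b -> valid_policy pol ->
  [/\ (1%:E <= comp_ratio f0 f1 a b pol)%E,
      ((3^-1 * Num.sqrt (b / a))%:E <= comp_ratio f0 f1 a b pol)%E &
      forall n : nat, (2 <= n)%N ->
        ((4^-1 * Num.min (n%:R) (f0 / (f1 + n%:R * a)))%:E
           <= comp_ratio f0 f1 a b pol)%E].
Proof.
move=> hf0 hf1 ha hab vp; split.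
- exact: part1.
- exact: part2.
- exact: part3.
Qed.
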